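(* (i) Let $W$ be a real entanglement witness on $\mathbb{C}^m\otimes\mathbb{C}^n$. If $W$ detects an entangled state $\rho$ (i.e. $\mathrm{tr}(W\rho)<0$), then $W$ also detects $\rho^*$ and $\rho^+$. Conversely, if a real entangled state $\rho$ is detected by an entanglement witness $W$, then $\rho$ is also detected by the two entanglement witnesses $W^*$ and $W^+$. (ii) An entangled state $\rho$ on $\mathbb{C}^m\otimes\mathbb{C}^n$ is detected by some real entanglement witness if and only if $\rho^+$ is a real entangled state.
   Context: An entanglement witness (EW) on $\mathbb{C}^m\otimes\mathbb{C}^n$ is a Hermitian matrix $W$ such that $\mathrm{tr}(W\sigma)\ge 0$ for every separable state $\sigma$ and $\mathrm{tr}(W\sigma)<0$ for at least one entangled state $\sigma$; $W$ detects a state $\rho$ if $\mathrm{tr}(W\rho)<0$. A real EW is an EW whose matrix (in the computational product basis) has real entries; a real state is a state whose density matrix has real entries. Separability/entanglement always refers to the standard definition over the complex Hilbert space. For a Hermitian $H$, $H^*$ is its entrywise complex conjugate and $H^+:=\frac12(H+H^* )$ is its real part. *)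

(* Defs.v *)
(* Kronecker product: mathcomp-real-closed's mxtens (A *t B), whose index
   convention (i1,i2) |-> i1*n + i2 is the computational product basis. *)
From HB Require Import structures.
From mathcomp Require Import all_boot all_order all_algebra.
From mathcomp Require Import reals.
From mathcomp Require Import complex mxtens.
Set Implicit Arguments.
Unset Strict Implicit.
Unset Printing Implicit Defensive.
Import Order.TTheory GRing.Theory Num.Theory.
Local Open Scope ring_scope.

Section QInfo.
Variable R : realType.
Local Notation C := (R[i]).

Definition mxconj {p q : nat} (A : 'M[C]_(p, q)) : 'M[C]_(p, q) :=
  map_mx (fun z => Num.conj z) A.

Definition adj {p q : nat} (A : 'M[C]_(p, q)) : 'M[C]_(q, p) := (mxconj A)^T.

Definition mxrealpart {p : nat} (A : 'M[C]_p) : 'M[C]_p :=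
  (2%:R)^-1 *: (A + mxconj A).

Definition hermitian {p : nat} (A : 'M[C]_p) : Prop := adj A = A.

(* positive semidefinite: v^dagger A v >= 0 for every complex vector v
   (the order on C forces the value to be real) *)
Definition psd {p : nat} (A : 'M[C]_p) : Prop :=
  hermitian A /\ forall v : 'cV[C]_p, 0 <= (adj v *m A *m v) 0 0.

Definition state {p : nat} (A : 'M[C]_p) : Prop := psd A /\ \tr A = 1.

Definition real_mx {p q : nat} (A : 'M[C]_(p, q)) : Prop :=
  forall i j, A i j \is Num.real.

Definition separable (m n : nat) (s : 'M[C]_(m * n)) : Prop :=
  exists (K : nat) (w : 'I_K -> C) (A : 'I_K -> 'M[C]_m) (B : 'I_K -> 'M[C]_n),
    [/\ forall k, 0 <= w k,
        \sum_(k < K) w k = 1,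
        forall k, state (A k),
        forall k, state (B k) &
        s = \sum_(k < K) w k *: (A k *t B k)].

Definition entangled (m n : nat) (s : 'M[C]_(m * n)) : Prop :=
  state s /\ ~ separable s.

Definition detects {p : nat} (W rho : 'M[C]_p) : Prop := \tr (W *m rho) < 0.

Definition EW (m n : nat) (W : 'M[C]_(m * n)) : Prop :=
  [/\ hermitian W,
      forall s : 'M[C]_(m * n), separable s -> 0 <= \tr (W *m s) &
      exists s : 'M[C]_(m * n), entangled s /\ detects W s].

Definition real_EW (m n : nat) (W : 'M[C]_(m * n)) : Prop :=
  EW W /\ real_mx W.

End QInfo.

(* Main.v *)
Require Import Defs.
From HB Require Import structures.
From mathcomp Require Import all_boot all_order all_algebra.
From mathcomp Require Import reals.
From mathcomp Require Import complex mxtens.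
From mathcomp Require Import boolp classical_sets topology normedtype derive.
From mathcomp Require Import ring lra.
Import Order.TTheory GRing.Theory Num.Theory.
Import numFieldNormedType.Exports.
Set Implicit Arguments.
Unset Strict Implicit.
Unset Printing Implicit Defensive.
Local Open Scope ring_scope.

Section P1.
Variable R : realType.
Local Notation C := (R[i]).

Lemma mxconjE p q (A : 'M[C]_(p,q)) i j : mxconj A i j = (A i j)^*.
Proof. by rewrite /mxconj mxE. Qed.

Lemma mxconjD p q (A B : 'M[C]_(p,q)) : mxconj (A + B) = mxconj A + mxconj B.
Proof. by apply/matrixP=> i j; rewrite !mxE rmorphD. Qed.

Lemma mxconjN p q (A : 'M[C]_(p,q)) : mxconj (- A) = - mxconj A.
Proof. by apply/matrixP=> i j; rewrite !mxE rmorphN. Qed.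

Lemma mxconjZ p q a (A : 'M[C]_(p,q)) : mxconj (a *: A) = a^* *: mxconj A.
Proof. by apply/matrixP=> i j; rewrite !mxE rmorphM. Qed.

Lemma mxconjM p q r (A : 'M[C]_(p,q)) (B : 'M[C]_(q,r)) :
  mxconj (A *m B) = mxconj A *m mxconj B.
Proof.
apply/matrixP=> i j; rewrite !mxE rmorph_sum; apply: eq_bigr => k _.
by rewrite !mxE rmorphM.
Qed.

Lemma mxconj_sum p q (I : finType) (F : I -> 'M[C]_(p,q)) :
  mxconj (\sum_k F k) = \sum_k mxconj (F k).
Proof.
apply/matrixP=> i j; rewrite mxE !summxE rmorph_sum; apply: eq_bigr => k _.
by rewrite mxE.
Qed.

Lemma mxconjK p q (A : 'M[C]_(p,q)) : mxconj (mxconj A) = A.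
Proof. by apply/matrixP=> i j; rewrite !mxE conjCK. Qed.

Lemma mxconj_tr p q (A : 'M[C]_(p,q)) : mxconj (A^T) = (mxconj A)^T.
Proof. by apply/matrixP=> i j; rewrite !mxE. Qed.

Lemma mxconj_trace p (A : 'M[C]_p) : \tr (mxconj A) = (\tr A)^*.
Proof. by rewrite /mxtrace rmorph_sum; apply: eq_bigr => i _; rewrite mxE. Qed.

Lemma mxconj_tens p q r s (A : 'M[C]_(p,q)) (B : 'M[C]_(r,s)) :
  mxconj (A *t B) = mxconj A *t mxconj B.
Proof. by apply/matrixP=> i j; rewrite !mxE rmorphM. Qed.

Lemma mxconj1 p : mxconj (1%:M : 'M[C]_p) = 1%:M.
Proof. by apply/matrixP=> i j; rewrite !mxE rmorphMn rmorph1. Qed.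

Lemma herm_conj p (A : 'M[C]_p) : Defs.hermitian A -> mxconj A = A^T.
Proof. by move=> hA; rewrite -[in LHS]hA /adj mxconj_tr mxconjK. Qed.

Lemma conj_herm p (A : 'M[C]_p) : Defs.hermitian A -> Defs.hermitian (mxconj A).
Proof. by move=> hA; rewrite /Defs.hermitian /adj mxconjK herm_conj // trmxK. Qed.

Lemma adjD p q (A B : 'M[C]_(p,q)) : adj (A + B) = adj A + adj B.
Proof. by rewrite /adj mxconjD linearD. Qed.

Lemma adjZ p q a (A : 'M[C]_(p,q)) : adj (a *: A) = a^* *: adj A.
Proof. by rewrite /adj mxconjZ linearZ. Qed.

Lemma hermD p (A B : 'M[C]_p) : Defs.hermitian A -> Defs.hermitian B -> Defs.hermitian (A + B).
Proof. by rewrite /Defs.hermitian adjD => -> ->. Qed.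

Lemma hermZ p a (A : 'M[C]_p) : a \is Num.real -> Defs.hermitian A -> Defs.hermitian (a *: A).
Proof. by move=> /conj_Creal ra; rewrite /Defs.hermitian adjZ ra => ->. Qed.

Lemma real_mx_conj p q (A : 'M[C]_(p,q)) : real_mx A -> mxconj A = A.
Proof. by move=> rA; apply/matrixP=> i j; rewrite mxE conj_Creal. Qed.

Lemma tr_herm_real p (W Y : 'M[C]_p) : Defs.hermitian W -> Defs.hermitian Y ->
  (\tr (W *m Y))^* = \tr (W *m Y).
Proof.
move=> hW hY; rewrite -mxconj_trace mxconjM herm_conj // herm_conj //.
by rewrite -trmx_mul mxtrace_tr mxtrace_mulC.
Qed.

Lemma state_conj p (A : 'M[C]_p) : state A -> state (mxconj A).
Proof.
move=> [[hA psdA] trA]; split; last by rewrite mxconj_trace trA rmorph1.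
split; first exact: conj_herm.
move=> v; have := psdA (mxconj v).
rewrite -conjC_ge0 -mxconjE !mxconjM /adj mxconj_tr !mxconjK.
by [].
Qed.

Lemma psd_comb p (a b : C) (A B : 'M[C]_p) : 0 <= a -> 0 <= b -> psd A -> psd B ->
  psd (a *: A + b *: B).
Proof.
move=> a0 b0 [hA pA] [hB pB]; split.
  by apply: hermD; apply: hermZ; rewrite ?ger0_real.
move=> v; rewrite mulmxDr mulmxDl -!scalemxAr -!scalemxAl.
have e1 (M N : 'M[C]_(1,1)) : (M + N) 0 0 = M 0 0 + N 0 0 by rewrite mxE.
have e2 c (M : 'M[C]_(1,1)) : (c *: M) 0 0 = c * M 0 0 by rewrite mxE.
by rewrite e1 !e2; apply: addr_ge0; apply: mulr_ge0.
Qed.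

Lemma psdZ p (a : C) (A : 'M[C]_p) : 0 <= a -> psd A -> psd (a *: A).
Proof.
move=> a0 pA; have := psd_comb a0 (lexx 0) pA pA.
by rewrite scale0r addr0.
Qed.

Lemma conj_lt0 (z : C) : z < 0 -> z^* = z.
Proof. by move=> /ltr0_real /conj_Creal. Qed.

Lemma conj_ge0E (z : C) : 0 <= z -> z^* = z.
Proof. by move=> /ger0_real /conj_Creal. Qed.

Lemma half_gt0 : 0 < (2%:R : C)^-1.
Proof. by rewrite invr_gt0 ltr0n. Qed.

Lemma half_conj : ((2%:R : C)^-1)^* = (2%:R)^-1.
Proof. by rewrite conj_ge0E // ltW // half_gt0. Qed.

Lemma state_realpart p (A : 'M[C]_p) : state A -> state (mxrealpart A).
Proof.
move=> sA; have sA' := state_conj sA; case: sA => pA tA; case: sA' => pA' tA'.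
split; last first.
  by rewrite /mxrealpart mxtraceZ mxtraceD tA tA' mulVf // pnatr_eq0.
rewrite /mxrealpart scalerDr; apply: psd_comb => //; exact/ltW/half_gt0.
Qed.

Lemma real_mx_realpart p (A : 'M[C]_p) : real_mx (mxrealpart A).
Proof.
move=> i j; apply/CrealP; rewrite /mxrealpart /mxconj !mxE rmorphM rmorphD /= conjCK half_conj.
by rewrite addrC.
Qed.

Lemma sep_conj m n (s : 'M[C]_(m * n)) : separable s -> separable (mxconj s).
Proof.
move=> [K [w [A [B [w0 w1 sA sB ->]]]]].
exists K, w, (fun k => mxconj (A k)), (fun k => mxconj (B k)); split => //.
- by move=> k; apply: state_conj.
- by move=> k; apply: state_conj.
rewrite mxconj_sum; apply: eq_bigr => k _.
by rewrite mxconjZ mxconj_tens conj_ge0E.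
Qed.

Lemma tr_conj_mul p (W s : 'M[C]_p) : \tr (mxconj W *m s) = (\tr (W *m mxconj s))^*.
Proof. by rewrite -mxconj_trace mxconjM mxconjK. Qed.

Lemma tr_realpart p (W s : 'M[C]_p) :
  \tr (mxrealpart W *m s) = (2%:R)^-1 * (\tr (W *m s) + \tr (mxconj W *m s)).
Proof. by rewrite /mxrealpart -scalemxAl mxtraceZ mulmxDl mxtraceD. Qed.

Lemma tr_realpart_r p (W s : 'M[C]_p) :
  \tr (W *m mxrealpart s) = (2%:R)^-1 * (\tr (W *m s) + \tr (W *m mxconj s)).
Proof. by rewrite /mxrealpart -scalemxAr mxtraceZ mulmxDr mxtraceD. Qed.

Lemma half_lt0 (a b : C) : a < 0 -> b < 0 -> (2%:R)^-1 * (a + b) < 0.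
Proof.
move=> a0 b0; rewrite pmulr_rlt0 ?half_gt0 //.
by rewrite -oppr_gt0 opprD addr_gt0 // oppr_gt0.
Qed.

Lemma half_ge0 (a b : C) : 0 <= a -> 0 <= b -> 0 <= (2%:R)^-1 * (a + b).
Proof. by move=> a0 b0; rewrite mulr_ge0 ?addr_ge0 // ltW // half_gt0. Qed.

End P1.

Section Cara.
Variables (R : realType) (m n : nat).
Local Notation C := (R[i]).
Local Notation N := (m * n)%N.
Local Notation cRe := (@complex.Re R).
Local Notation cIm := (@complex.Im R).

Definition comb K (w : 'I_K -> R) (A : 'I_K -> 'M[C]_m) (B : 'I_K -> 'M[C]_n)
  (s : 'M[C]_N) :=
  [/\ forall k, 0 <= w k, \sum_k w k = 1, forall k, state (A k),
      forall k, state (B k) & s = \sum_k (w k)%:C%C *: (A k *t B k)].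

Lemma ReD (x y : C) : cRe (x + y) = cRe x + cRe y. Proof. by case: x => ? ?; case: y => ? ? /=. Qed.
Lemma ImD (x y : C) : cIm (x + y) = cIm x + cIm y. Proof. by case: x => ? ?; case: y => ? ? /=. Qed.
Lemma Re_sum (I : finType) (F : I -> C) : cRe (\sum_i F i) = \sum_i cRe (F i).
Proof. exact: (big_morph _ ReD). Qed.
Lemma Im_sum (I : finType) (F : I -> C) : cIm (\sum_i F i) = \sum_i cIm (F i).
Proof. exact: (big_morph _ ImD). Qed.
Lemma ReRM (a : R) (z : C) : cRe (a%:C%C * z) = a * cRe z.
Proof. by case: z => x y; rewrite /= mul0r subr0. Qed.
Lemma ImRM (a : R) (z : C) : cIm (a%:C%C * z) = a * cIm z.
Proof. by case: z => x y; rewrite /= mul0r addr0. Qed.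
Lemma complex_eq0 (z : C) : cRe z = 0 -> cIm z = 0 -> z = 0.
Proof. by case: z => x y /= -> ->. Qed.

Lemma sum_RC (I : finType) (F : I -> R) : (\sum_i F i)%:C%C = \sum_i (F i)%:C%C :> C.
Proof. by rewrite rmorph_sum. Qed.

Lemma sepE (s : 'M[C]_N) :
  separable s <-> exists K w A B, @comb K w A B s.
Proof.
split.
  move=> [K [w [A [B [w0 w1 sA sB ->]]]]].
  have wE k : (cRe (w k))%:C%C = w k by rewrite RRe_real // ger0_real.
  exists K, (fun k => cRe (w k)), A, B; split => //.
  - by move=> k; rewrite -ler0c wE.
  - by apply: complexI; rewrite sum_RC (eq_bigr _ (fun k _ => wE k)) w1.
  - by apply: eq_bigr => k _; rewrite wE.
move=> [K [w [A [B [w0 w1 sA sB ->]]]]].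
exists K, (fun k => (w k)%:C%C), A, B; split => //.
- by move=> k; rewrite ler0c.
- by rewrite -sum_RC w1.
Qed.

Lemma comb_pad K w A B s : @comb K w A B s ->
  exists w' A' B', @comb K.+1 w' A' B' s.
Proof.
case: K w A B => [|K] w A B.
  by case=> _; rewrite big_ord0 => /eqP; rewrite eq_sym oner_eq0.
move=> [w0 w1 sA sB ->].
pose w' (k : 'I_K.+2) := if unlift ord_max k is Some k' then w k' else 0.
pose A' (k : 'I_K.+2) := if unlift ord_max k is Some k' then A k' else A ord0.
pose B' (k : 'I_K.+2) := if unlift ord_max k is Some k' then B k' else B ord0.
have um : unlift (@ord_max K.+1) ord_max = None by apply: unlift_none.
exists w', A', B'; split.
- by move=> k; rewrite /w'; case: unlift.
- by rewrite (bigD1_ord ord_max) //= /w' unlift_none add0r; under eq_bigr => k _ do rewrite liftK.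
- by move=> k; rewrite /A'; case: unlift.
- by move=> k; rewrite /B'; case: unlift.
rewrite [RHS](bigD1_ord ord_max) //= /w' unlift_none scale0r add0r.
by apply: eq_bigr => k _; rewrite /A' /B' liftK.
Qed.

Definition J1 := option ('I_N * 'I_N * bool).

Lemma ex_argmin (I : finType) (P : pred I) (F : I -> R) i0 : P i0 ->
  exists2 j, P j & forall k, P k -> F j <= F k.
Proof.
move=> Pi0; case: (Order.TotalTheory.arg_minP F Pi0) => j Pj Hj.
by exists j.
Qed.

Lemma comb_drop K w A B s : @comb K.+1 w A B s -> (#|{: J1}| < K.+1)%N ->
  exists w' A' B', @comb K w' A' B' s.
Proof.
move=> [w0 w1 sA sB sE] Klt.
pose P k := A k *t B k.
pose feat k (x : J1) : R := match x with
  | None => 1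
  | Some (i, j, b) => if b then cIm (P k i j) else cRe (P k i j) end.
pose M : 'M[R]_(K.+1, #|{: J1}|) := \matrix_(k, c) feat k (enum_val c).
have nfree : ~~ row_free M.
  by rewrite -row_leq_rank -ltnNge (leq_ltn_trans (rank_leq_col M)).
have kM0 : kermx M != 0 by rewrite kermx_eq0.
pose u := nz_row (kermx M).
have u0 : u != 0 by rewrite nz_row_eq0.
have uM : u *m M = 0 by apply/sub_kermxP; apply: nz_row_sub.
pose mu k := u ord0 k.
have mueq x : \sum_k mu k * feat k x = 0.
  have := congr1 (fun X : 'rV_ _ => X ord0 (enum_rank x)) uM.
  rewrite !mxE /= => H; rewrite -[RHS]H; apply: eq_bigr => k _; by rewrite mxE enum_rankK.
have musum : \sum_k mu k = 0.
  by rewrite -[RHS](mueq None); apply: eq_bigr => k _; rewrite mulr1.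
have muP : \sum_k (mu k)%:C%C *: P k = 0.
  apply/matrixP => i j; rewrite summxE mxE; apply: complex_eq0.
  - rewrite Re_sum -[RHS](mueq (Some (i, j, false))); apply: eq_bigr => k _.
    by rewrite mxE ReRM.
  - rewrite Im_sum -[RHS](mueq (Some (i, j, true))); apply: eq_bigr => k _.
    by rewrite mxE ImRM.
have [k0 muk0] : exists k, 0 < mu k.
  apply/existsP; apply: contraR u0 => /existsPn H.
  have Hle k : 0 <= - mu k by rewrite oppr_ge0 leNgt; apply: H.
  have Hs : \sum_k (- mu k) = 0 by rewrite sumrN musum oppr0.
  have Hz := (psumr_eq0P (fun k _ => Hle k) Hs).
  apply/eqP/matrixP => i k; rewrite (ord1 i) mxE.
  by apply/eqP; rewrite -oppr_eq0; apply/eqP; apply: Hz.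
have [j muj Hj] := ex_argmin (fun k => w k / mu k) (muk0 : (fun k => 0 < mu k) k0).
pose t := w j / mu j.
have t0 : 0 <= t by rewrite divr_ge0 // ltW.
pose w1' k := w k - t * mu k.
have w1j : w1' j = 0 by rewrite /w1' /t divfK ?subrr // gt_eqF.
have w1pos k : 0 <= w1' k.
  rewrite /w1' subr_ge0; case: (ltrP 0 (mu k)) => [mk|mk].
    by rewrite -ler_pdivlMr // Hj.
  by apply: le_trans (w0 k); rewrite mulr_ge0_le0.
have w1sum : \sum_k w1' k = 1.
  by rewrite /w1' sumrB -mulr_sumr musum mulr0 subr0.
have w1comb : s = \sum_k (w1' k)%:C%C *: P k.
  rewrite /w1'; under eq_bigr => k _ do rewrite rmorphB rmorphM scalerBl -scalerA.
  by rewrite sumrB -scaler_sumr muP scaler0 subr0.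
exists (fun k => w1' (lift j k)), (fun k => A (lift j k)), (fun k => B (lift j k)).
split => //.
- by rewrite -w1sum (bigD1_ord j) //= w1j add0r.
- by rewrite w1comb (bigD1_ord j) //= w1j scale0r add0r.
Qed.

Definition K0 := #|{: J1}|.

Lemma comb_up K w A B s : @comb K w A B s -> (K <= K0)%N ->
  exists w' A' B', @comb K0 w' A' B' s.
Proof.
move=> c; move Ed: (K0 - K)%N => d; elim: d K w A B c Ed => [|d IH] K w A B c Ed KK0.
  have -> : K0 = K by apply/eqP; rewrite eqn_leq KK0 -subn_eq0 Ed.
  by exists w, A, B.
have [w' [A' [B' c']]] := comb_pad c.
apply: (IH _ _ _ _ c'); first by rewrite subnS Ed.
by rewrite -subn_gt0 Ed.
Qed.

Lemma comb_down K w A B s : @comb K w A B s -> (K0 <= K)%N ->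
  exists w' A' B', @comb K0 w' A' B' s.
Proof.
move=> c; move Ed: (K - K0)%N => d; elim: d K w A B c Ed => [|d IH] K w A B c Ed KK0.
  have -> : K0 = K by apply/eqP; rewrite eqn_leq KK0 -subn_eq0 Ed.
  by exists w, A, B.
case: K w A B c Ed KK0 => [|K] w A B c Ed KK0; first by rewrite sub0n in Ed.
have KK : (K0 < K.+1)%N by rewrite -subn_gt0 Ed.
have [w' [A' [B' c']]] := comb_drop c KK.
apply: (IH _ _ _ _ c') => //.
by move: Ed; rewrite subSn // => -[].
Qed.

Lemma comb_K0 K w A B s : @comb K w A B s ->
  exists w' A' B', @comb K0 w' A' B' s.
Proof.
move=> c; case: (leqP K K0) => h; first exact: comb_up c h.
exact: comb_down c (ltnW h).
Qed.

Lemma splitL p q (i : 'I_p) : split (lshift q i) = inl i.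
Proof. exact: (unsplitK (inl i)). Qed.
Lemma splitR p q (i : 'I_q) : split (rshift p i) = inr i.
Proof. exact: (unsplitK (inr i)). Qed.

Lemma comb_conv K1 w1 A1 B1 a K2 w2 A2 B2 b (t : R) :
  @comb K1 w1 A1 B1 a -> @comb K2 w2 A2 B2 b -> 0 <= t <= 1 ->
  exists w A B, @comb (K1 + K2) w A B ((1 - t)%:C%C *: a + t%:C%C *: b).
Proof.
move=> [w10 w11 sA1 sB1 ->] [w20 w21 sA2 sB2 ->] /andP[t0 t1].
pose w k := match split k with inl k1 => (1 - t) * w1 k1 | inr k2 => t * w2 k2 end.
pose A k := match split k with inl k1 => A1 k1 | inr k2 => A2 k2 end.
pose B k := match split k with inl k1 => B1 k1 | inr k2 => B2 k2 end.
exists w, A, B; split.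
- by move=> k; rewrite /w; case: split => k'; rewrite mulr_ge0 // subr_ge0.
- rewrite big_split_ord /w (eq_bigr (fun k => (1 - t) * w1 k)); last by move=> k _; rewrite splitL.
  rewrite (eq_bigr (fun k => t * w2 k)); last by move=> k _; rewrite splitR.
  by rewrite -!mulr_sumr w11 w21 !mulr1 /= subrK.
- by move=> k; rewrite /A; case: split.
- by move=> k; rewrite /B; case: split.
rewrite big_split_ord !scaler_sumr; congr (_ + _); apply: eq_bigr => k _;
  by rewrite /w /A /B ?splitL ?splitR rmorphM scalerA.
Qed.

End Cara.

Section Alg.
Variables (R : realType).
Local Notation C := (R[i]).
Local Notation cRe := (@complex.Re R).
Local Notation cIm := (@complex.Im R).

Lemma trace_tens p q (A : 'M[C]_p) (B : 'M[C]_q) : \tr (A *t B) = \tr A * \tr B.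
Proof. by rewrite /mxtrace mulr_sum; apply: eq_bigr => i _; rewrite mxE. Qed.

Lemma herm_tens p q (A : 'M[C]_p) (B : 'M[C]_q) :
  Defs.hermitian A -> Defs.hermitian B -> Defs.hermitian (A *t B).
Proof.
move=> hA hB; rewrite /Defs.hermitian -[RHS](congr2 (@tensmx _ _ _ _ _) hA hB).
by apply/matrixP => i j; rewrite /adj !mxE rmorphM.
Qed.

Lemma herm_sum p (I : finType) (F : I -> 'M[C]_p) :
  (forall i, Defs.hermitian (F i)) -> Defs.hermitian (\sum_i F i).
Proof.
move=> hF; rewrite /Defs.hermitian /adj mxconj_sum linear_sum /=.
by apply: eq_bigr => i _; apply: hF.
Qed.

Lemma sep_herm_tr m n (s : 'M[C]_(m * n)) : separable s ->
  Defs.hermitian s /\ \tr s = 1.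
Proof.
move=> [K [w [A [B [w0 w1 sA sB ->]]]]]; split.
  apply: herm_sum => k; apply: hermZ; first exact: ger0_real.
  by apply: herm_tens; [case: (sA k) => -[]|case: (sB k) => -[]].
rewrite raddf_sum /= -[RHS]w1; apply: eq_bigr => k _.
by rewrite mxtraceZ trace_tens; case: (sA k) => _ ->; case: (sB k) => _ ->; rewrite mulr1 mulr1.
Qed.

Lemma herm_entry p (A : 'M[C]_p) i j : Defs.hermitian A -> A j i = (A i j)^*.
Proof. by move=> hA; rewrite -[in LHS]hA /adj !mxE. Qed.

Lemma trace_sq p (X : 'M[C]_p) : Defs.hermitian X ->
  \tr (X *m X) = \sum_i \sum_j `|X i j| ^+ 2.
Proof.
move=> hX; apply: eq_bigr => i _; rewrite mxE; apply: eq_bigr => j _.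
by rewrite (herm_entry i j hX) normCK.
Qed.

Lemma trace_sq_ge0 p (X : 'M[C]_p) : Defs.hermitian X -> 0 <= \tr (X *m X).
Proof.
by move=> hX; rewrite trace_sq //; apply: sumr_ge0 => i _; apply: sumr_ge0 => j _; apply: exprn_ge0.
Qed.

Lemma trace_sq_gt0 p (X : 'M[C]_p) : Defs.hermitian X -> X != 0 -> 0 < \tr (X *m X).
Proof.
move=> hX X0; rewrite lt_def trace_sq_ge0 // andbT; apply: contra X0 => /eqP H.
rewrite trace_sq // in H.
have H1 := psumr_eq0P (fun i _ => sumr_ge0 _ (fun j _ => exprn_ge0 2 (normr_ge0 (X i j)))) H.
apply/eqP/matrixP => i j; rewrite mxE.
have H2 := psumr_eq0P (fun j _ => exprn_ge0 2 (normr_ge0 (X i j))) (H1 i erefl).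
by have /eqP := H2 j erefl; rewrite sqrf_eq0 normr_eq0 => /eqP.
Qed.

Lemma real_ge0 (z : C) : z \is Num.real -> 0 <= cRe z -> 0 <= z.
Proof.
move=> /RRe_real <-; by rewrite ler0c.
Qed.

Lemma quad_lemma (a b : R) : 0 <= b ->
  (forall t, 0 < t -> t <= 1 -> 0 <= 2 * t * a + t ^+ 2 * b) -> 0 <= a.
Proof.
move=> b0 H; rewrite leNgt; apply/negP => a0.
pose t := - a / (b - a).
have ba : 0 < b - a by rewrite subr_gt0 (lt_le_trans a0 b0).
have t0 : 0 < t by rewrite divr_gt0 // oppr_gt0.
have t1 : t <= 1 by rewrite ler_pdivrMr // mul1r; lra.
have ht : t * (b - a) = - a by rewrite divfK // gt_eqF.
have := H t t0 t1.
have -> : 2 * t * a + t ^+ 2 * b = t * a * (1 + t).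
  have hb : t * b = t * a - a by move: ht; rewrite mulrBr => <-; ring.
  have -> : t ^+ 2 * b = t * (t * b) by ring.
  by rewrite hb; ring.
have : t * a * (1 + t) < 0.
  by rewrite -mulrA pmulr_rlt0 // nmulr_rlt0 // addr_gt0.
by move=> h1 h2; have := lt_le_trans h1 h2; rewrite ltxx.
Qed.

End Alg.

Section Bound.
Variables (R : realType).
Local Notation C := (R[i]).
Local Notation cRe := (@complex.Re R).
Local Notation cIm := (@complex.Im R).

Lemma conjCE (z : C) : z^* = (z^*)%C. Proof. by []. Qed.

Lemma adj_delta p (a : 'I_p) : adj (delta_mx a 0 : 'cV[C]_p) = delta_mx 0 a.
Proof.
apply/matrixP => i j; rewrite /adj !mxE.
by case: (_ == _); case: (_ == _); rewrite /= ?rmorph1 ?rmorph0.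
Qed.

Lemma Qdelta p (A : 'M[C]_p) a b :
  (adj (delta_mx a 0 : 'cV[C]_p) *m A *m (delta_mx b 0 : 'cV[C]_p)) 0 0 = A a b.
Proof. by rewrite adj_delta -rowE -colE !mxE. Qed.

Lemma Qexpand p (A : 'M[C]_p) i j (c : C) :
  let u := (delta_mx i 0 + c *: delta_mx j 0 : 'cV[C]_p) in
  (adj u *m A *m u) 0 0 = A i i + c * A i j + c^* * A j i + c^* * c * A j j.
Proof.
move=> u; rewrite /u adjD adjZ !mulmxDl !mulmxDr -!scalemxAl -!scalemxAr.
have e1 (M N : 'M[C]_(1,1)) : (M + N) 0 0 = M 0 0 + N 0 0 by rewrite mxE.
have e2 d (M : 'M[C]_(1,1)) : (d *: M) 0 0 = d * M 0 0 by rewrite mxE.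
rewrite !e1 !e2 !Qdelta.
by rewrite !mulrA addrA.
Qed.

Lemma state_bound p (A : 'M[C]_p) : state A -> forall i j,
  [/\ -1 <= cRe (A i j) <= 1 & -1 <= cIm (A i j) <= 1].
Proof.
move=> [[hA pA] tA].
have diag0 k : 0 <= A k k by have := pA (delta_mx k 0); rewrite Qdelta.
have diagR k : cIm (A k k) = 0 by apply: ger0_Im.
have diagRe0 k : 0 <= cRe (A k k) by move: (diag0 k); rewrite lecE => /andP[].
have diag1 k : cRe (A k k) <= 1.
  have : cRe (\tr A) = 1 by rewrite tA.
  rewrite /mxtrace Re_sum (bigD1 k) //= => <-.
  by rewrite lerDl; apply: sumr_ge0 => l _.
move=> i j.
have key (c : C) : c^* * c = 1 -> 0 <= cRe (A i i) + cRe (A j j) + cRe (c * A i j + c^* * (A i j)^*).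
  move=> cc; have := pA (delta_mx i 0 + c *: delta_mx j 0).
  rewrite Qexpand cc mul1r (herm_entry i j hA) lecE => /andP[_].
  by rewrite /= !ReD; lra.
have k1 := key 1 ltac:(by rewrite rmorph1 mulr1).
have k2 := key (-1) ltac:(by rewrite rmorphN rmorph1 mulrNN mulr1).
have k3 := key 'i ltac:(by rewrite mulrC -normCK normCi expr1n).
have k4 := key (- 'i) ltac:(by rewrite mulrC -normCK normrN normCi expr1n).
move: k1 k2 k3 k4; rewrite !conjCE.
have d1 := diag1 i; have d2 := diag1 j; have d3 := diagRe0 i; have d4 := diagRe0 j.
case: (A i j) => x y /=.
move=> k1 k2 k3 k4.
split; apply/andP; split; lra.
Qed.

End Bound.

Local Open Scope classical_set_scope.
Local Open Scope ring_scope.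

Section CC.
Variables (R : realType) (L : nat).
Local Notation C := (R[i]).
Local Notation cRe := (@complex.Re R).
Local Notation cIm := (@complex.Im R).
Local Notation T := 'rV[R]_L.

Lemma cont_cst (c : R) : continuous (fun _ : T => c).
Proof. exact: cst_continuous. Qed.
Lemma contD (f g : T -> R) : continuous f -> continuous g -> continuous (fun v => f v + g v).
Proof. by move=> cf cg x; apply: continuousD; [exact: cf|exact: cg]. Qed.
Lemma contM (f g : T -> R) : continuous f -> continuous g -> continuous (fun v => f v * g v).
Proof. by move=> cf cg x; apply: continuousM; [exact: cf|exact: cg]. Qed.
Lemma contN (f : T -> R) : continuous f -> continuous (fun v => - f v).
Proof. by move=> cf x; apply: continuousN; exact: cf. Qed.
Lemma contB (f g : T -> R) : continuous f -> continuous g -> continuous (fun v => f v - g v).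
Proof. by move=> cf cg; apply: contD => //; apply: contN. Qed.
Lemma cont_sum (I : finType) (F : I -> T -> R) :
  (forall i, continuous (F i)) -> continuous (fun v => \sum_i F i v).
Proof.
move=> cF; rewrite /index_enum; elim: (Finite.enum I) => [|a s IH].
  rewrite (_ : (fun v => _) = fun _ => 0); first exact: cont_cst.
  by apply: funext => v; rewrite big_nil.
rewrite (_ : (fun v => _) = fun v => F a v + \sum_(i <- s) F i v).
  exact: contD.
by apply: funext => v; rewrite big_cons.
Qed.

Definition cc (g : T -> C) := continuous (fun v => cRe (g v)) /\ continuous (fun v => cIm (g v)).

Lemma cc_cst (c : C) : cc (fun _ => c).
Proof. by split; apply: cont_cst. Qed.
Lemma cc_cpx (a b : T -> R) : continuous a -> continuous b -> cc (fun v => Complex (a v) (b v)).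
Proof. by []. Qed.
Lemma ccD f g : cc f -> cc g -> cc (fun v => f v + g v).
Proof.
move=> [f1 f2] [g1 g2]; split.
  by rewrite (_ : (fun v => _) = fun v => cRe (f v) + cRe (g v)); [apply: contD|apply: funext => v; rewrite ReD].
by rewrite (_ : (fun v => _) = fun v => cIm (f v) + cIm (g v)); [apply: contD|apply: funext => v; rewrite ImD].
Qed.
Lemma ccN f : cc f -> cc (fun v => - f v).
Proof.
move=> [f1 f2]; split.
  by rewrite (_ : (fun v => _) = fun v => - cRe (f v)); [apply: contN|apply: funext => v; case: (f v)].
by rewrite (_ : (fun v => _) = fun v => - cIm (f v)); [apply: contN|apply: funext => v; case: (f v)].
Qed.
Lemma ccB f g : cc f -> cc g -> cc (fun v => f v - g v).
Proof. by move=> cf cg; apply: ccD => //; apply: ccN. Qed.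
Lemma ccM f g : cc f -> cc g -> cc (fun v => f v * g v).
Proof.
move=> [f1 f2] [g1 g2]; split.
  rewrite (_ : (fun v => _) = fun v => cRe (f v) * cRe (g v) - cIm (f v) * cIm (g v)).
    by apply: contB; apply: contM.
  by apply: funext => v; case: (f v) => ? ?; case: (g v) => ? ?.
rewrite (_ : (fun v => _) = fun v => cRe (f v) * cIm (g v) + cIm (f v) * cRe (g v)).
  by apply: contD; apply: contM.
by apply: funext => v; case: (f v) => ? ?; case: (g v) => ? ?.
Qed.
Lemma ccJ f : cc f -> cc (fun v => (f v)^*).
Proof.
move=> [f1 f2]; split.
  by rewrite (_ : (fun v => _) = fun v => cRe (f v)); [|apply: funext => v; case: (f v)].
by rewrite (_ : (fun v => _) = fun v => - cIm (f v)); [apply: contN|apply: funext => v; case: (f v)].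
Qed.
Lemma cc_sum (I : finType) (F : I -> T -> C) : (forall i, cc (F i)) -> cc (fun v => \sum_i F i v).
Proof.
move=> cF; split.
  rewrite (_ : (fun v => _) = fun v => \sum_i cRe (F i v)); last by apply: funext => v; rewrite Re_sum.
  by apply: cont_sum => i; case: (cF i).
rewrite (_ : (fun v => _) = fun v => \sum_i cIm (F i v)); last by apply: funext => v; rewrite Im_sum.
by apply: cont_sum => i; case: (cF i).
Qed.

Definition ccm p q (G : T -> 'M[C]_(p, q)) := forall i j, cc (fun v => G v i j).

Lemma ccm_cst p q (M : 'M[C]_(p,q)) : ccm (fun _ => M).
Proof. by move=> i j; apply: cc_cst. Qed.
Lemma ccmD p q (F G : T -> 'M[C]_(p,q)) : ccm F -> ccm G -> ccm (fun v => F v + G v).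
Proof.
move=> cF cG i j; rewrite (_ : (fun v => _) = fun v => F v i j + G v i j).
  exact: ccD.
by apply: funext => v; rewrite mxE.
Qed.
Lemma ccmN p q (F : T -> 'M[C]_(p,q)) : ccm F -> ccm (fun v => - F v).
Proof.
move=> cF i j; rewrite (_ : (fun v => _) = fun v => - F v i j).
  exact: ccN.
by apply: funext => v; rewrite mxE.
Qed.
Lemma ccmB p q (F G : T -> 'M[C]_(p,q)) : ccm F -> ccm G -> ccm (fun v => F v - G v).
Proof. by move=> cF cG; apply: ccmD => //; apply: ccmN. Qed.
Lemma ccmZ p q (a : T -> C) (F : T -> 'M[C]_(p,q)) : cc a -> ccm F -> ccm (fun v => a v *: F v).
Proof.
move=> ca cF i j; rewrite (_ : (fun v => _) = fun v => a v * F v i j).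
  exact: ccM.
by apply: funext => v; rewrite mxE.
Qed.
Lemma ccmM p q r (F : T -> 'M[C]_(p,q)) (G : T -> 'M[C]_(q,r)) : ccm F -> ccm G ->
  ccm (fun v => F v *m G v).
Proof.
move=> cF cG i j; rewrite (_ : (fun v => _) = fun v => \sum_k F v i k * G v k j).
  by apply: cc_sum => k; apply: ccM.
by apply: funext => v; rewrite mxE.
Qed.
Lemma ccm_sum p q (I : finType) (F : I -> T -> 'M[C]_(p,q)) : (forall k, ccm (F k)) ->
  ccm (fun v => \sum_k F k v).
Proof.
move=> cF i j; rewrite (_ : (fun v => _) = fun v => \sum_k F k v i j).
  by apply: cc_sum => k; apply: cF.
by apply: funext => v; rewrite summxE.
Qed.
Lemma ccm_tens p q r s (F : T -> 'M[C]_(p,q)) (G : T -> 'M[C]_(r,s)) : ccm F -> ccm G ->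
  ccm (fun v => F v *t G v).
Proof.
move=> cF cG i j; rewrite (_ : (fun v => _) = fun v =>
  F v (mxtens_unindex i).1 (mxtens_unindex j).1 * G v (mxtens_unindex i).2 (mxtens_unindex j).2).
  by apply: ccM.
by apply: funext => v; rewrite mxE.
Qed.
Lemma ccm_adj p q (F : T -> 'M[C]_(p,q)) : ccm F -> ccm (fun v => adj (F v)).
Proof.
move=> cF i j; rewrite (_ : (fun v => _) = fun v => (F v j i)^*).
  by apply: ccJ.
by apply: funext => v; rewrite /adj !mxE.
Qed.
Lemma cc_trace p (F : T -> 'M[C]_p) : ccm F -> cc (fun v => \tr (F v)).
Proof. by move=> cF; apply: cc_sum => i; apply: cF. Qed.

Lemma closed_ge0R (f : T -> R) : continuous f -> closed [set v | 0 <= f v].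
Proof. by move=> cf; have := preimage_closed (fun x _ => cf x) (@closed_ge R 0). Qed.
Lemma closed_eqR (f : T -> R) (c : R) : continuous f -> closed [set v | f v = c].
Proof. by move=> cf; have := preimage_closed (fun x _ => cf x) (@closed_eq R c). Qed.
Lemma closed_forall (I : Type) (P : I -> set T) : (forall i, closed (P i)) ->
  closed [set v | forall i, P i v].
Proof.
move=> cP; have := closed_bigI (D := setT) (fun i _ => cP i).
by rewrite (_ : \bigcap_(i in setT) P i = [set v | forall i, P i v]) //; apply/seteqP; split => v /= H i //; apply: H.
Qed.
Lemma closed_and (P Q : set T) : closed P -> closed Q -> closed [set v | P v /\ Q v].
Proof. exact: closedI. Qed.
Lemma closed_cc_eq0 g : cc g -> closed [set v | g v = 0].
Proof.
move=> [g1 g2]; rewrite (_ : [set v | g v = 0] = [set v | cRe (g v) = 0 /\ cIm (g v) = 0]).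
  by apply: closed_and; apply: closed_eqR.
apply/seteqP; split => v /=; first by move=> ->.
by move=> [h1 h2]; apply: complex_eq0.
Qed.
Lemma closed_cc_ge0 g : cc g -> closed [set v | 0 <= g v].
Proof.
move=> [g1 g2]; rewrite (_ : [set v | 0 <= g v] = [set v | 0 <= cRe (g v) /\ cIm (g v) = 0]).
  by apply: closed_and; [apply: closed_ge0R|apply: closed_eqR].
apply/seteqP; split => v /=; rewrite lecE /=.
  by move=> /andP[/eqP -> ->].
by move=> [-> ->]; rewrite eqxx.
Qed.
Lemma closed_state p (F : T -> 'M[C]_p) : ccm F -> closed [set v | state (F v)].
Proof.
move=> cF.
rewrite (_ : [set v | state (F v)] = [set v | ((forall ij : 'I_p * 'I_p, adj (F v) ij.1 ij.2 - F v ij.1 ij.2 = 0)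
   /\ (forall u : 'cV[C]_p, 0 <= (adj u *m F v *m u) ord0 ord0)) /\ \tr (F v) - 1 = 0]).
  apply: closed_and; first apply: closed_and.
  - apply: closed_forall => -[i j]; apply: closed_cc_eq0.
    by apply: ccB; [apply: ccm_adj|apply: cF].
  - apply: closed_forall => u; apply: closed_cc_ge0.
    by apply: ccmM; [apply: ccmM => //|]; apply: ccm_cst.
  - by apply: closed_cc_eq0; apply: ccB; [apply: cc_trace|apply: cc_cst].
apply/seteqP; split => v /=.
  move=> [[hF pF] tF]; split; last by rewrite tF subrr.
  by split => // -[i j]; rewrite hF subrr.
move=> [[hF pF] /eqP tF]; split; last by move: tF; rewrite subr_eq0 => /eqP.
split => //; apply/matrixP => i j; apply/eqP; rewrite -subr_eq0.
by have := hF (i, j) => /= ->.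
Qed.

End CC.

Section Param.
Variables (R : realType) (m n : nat).
Local Notation C := (R[i]).
Local Notation cRe := (@complex.Re R).
Local Notation cIm := (@complex.Im R).
Local Notation N := (m * n)%N.
Local Notation KK := (K0 m n).

Definition Idx := ('I_KK + ('I_KK * 'I_m * 'I_m * bool) + ('I_KK * 'I_n * 'I_n * bool))%type.
Local Notation L := #|{: Idx}|.
Local Notation T := 'rV[R]_L.

Definition crd (v : T) (x : Idx) : R := v ord0 (enum_rank x).
Definition lamv (v : T) (k : 'I_KK) : R := crd v (inl (inl k)).
Definition Av (v : T) (k : 'I_KK) : 'M[C]_m :=
  \matrix_(i, j) Complex (crd v (inl (inr (k, i, j, false)))) (crd v (inl (inr (k, i, j, true)))).
Definition Bv (v : T) (k : 'I_KK) : 'M[C]_n :=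
  \matrix_(i, j) Complex (crd v (inr (k, i, j, false))) (crd v (inr (k, i, j, true))).
Definition Xv (v : T) : 'M[C]_N := \sum_k (lamv v k)%:C%C *: (Av v k *t Bv v k).
Definition Dom : set T := [set v | comb (lamv v) (Av v) (Bv v) (Xv v)].

Lemma crd_cont x : continuous (fun v : T => crd v x).
Proof. exact: coord_continuous. Qed.

Lemma Av_ccm k : ccm (fun v => Av v k).
Proof.
move=> i j; rewrite (_ : (fun v => _) = fun v => Complex (crd v (inl (inr (k, i, j, false)))) (crd v (inl (inr (k, i, j, true))))).
  by apply: cc_cpx; apply: crd_cont.
by apply: funext => v; rewrite mxE.
Qed.

Lemma Bv_ccm k : ccm (fun v => Bv v k).
Proof.
move=> i j; rewrite (_ : (fun v => _) = fun v => Complex (crd v (inr (k, i, j, false))) (crd v (inr (k, i, j, true)))).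
  by apply: cc_cpx; apply: crd_cont.
by apply: funext => v; rewrite mxE.
Qed.

Lemma Xv_ccm : ccm Xv.
Proof.
apply: ccm_sum => k; apply: ccmZ; last by apply: ccm_tens; [apply: Av_ccm|apply: Bv_ccm].
by apply: (@cc_cpx _ _ (fun v => lamv v k) (fun _ => 0)); [apply: crd_cont|apply: cont_cst].
Qed.

Lemma Dom_closed : closed Dom.
Proof.
rewrite (_ : Dom = [set v | ((forall k, 0 <= lamv v k) /\ (\sum_k lamv v k = 1)) /\
   ((forall k, state (Av v k)) /\ (forall k, state (Bv v k)))]).
  apply: closed_and; apply: closed_and.
  - by apply: closed_forall => k; apply: closed_ge0R; apply: crd_cont.
  - by apply: closed_eqR; apply: cont_sum => k; apply: crd_cont.
  - by apply: closed_forall => k; apply: closed_state; apply: Av_ccm.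
  - by apply: closed_forall => k; apply: closed_state; apply: Bv_ccm.
apply/seteqP; split => v /=.
  by move=> [h1 h2 h3 h4 h5].
by move=> [[h1 h2] [h3 h4]]; split.
Qed.

Definition box : set T := [set v | forall c, `[(-1 : R), 1]%classic (v ord0 c)].

Lemma box_compact : compact box.
Proof. exact: (@rV_compact _ _ (fun=> `[(-1 : R), 1]%classic) (fun=> @segment_compact R (-1) 1)). Qed.

Lemma Dom_box : Dom `<=` box.
Proof.
move=> v [h0 h1 hA hB _] c /=; rewrite in_itv /=.
have -> : v ord0 c = crd v (enum_val c) by rewrite /crd enum_valK.
case: (enum_val c) => [[k|[[[k i] j] b]]|[[[k i] j] b]].
- have l1 : lamv v k <= 1.
    rewrite -h1 (bigD1 k) //= lerDl; apply: sumr_ge0 => l _; exact: h0.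
  by apply/andP; split => //; apply: le_trans (h0 k); rewrite lerN10.
- have [hr hi] := state_bound (hA k) i j.
  by move: hr hi; rewrite /Av mxE /=; case: b.
- have [hr hi] := state_bound (hB k) i j.
  by move: hr hi; rewrite /Bv mxE /=; case: b.
Qed.

Lemma Dom_compact : compact Dom.
Proof. exact: subclosed_compact Dom_closed box_compact Dom_box. Qed.

Lemma Dom_encode w A B s : @comb R m n KK w A B s -> exists2 v, Dom v & Xv v = s.
Proof.
move=> c.
pose enc (x : Idx) : R := match x with
  | inl (inl k) => w k
  | inl (inr (k, i, j, b)) => if b then cIm (A k i j) else cRe (A k i j)
  | inr (k, i, j, b) => if b then cIm (B k i j) else cRe (B k i j) end.
pose v : T := \row_c enc (enum_val c).
have crdE x : crd v x = enc x by rewrite /crd mxE enum_rankK.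
have lE : lamv v = w by apply: funext => k; rewrite /lamv crdE.
have AE : Av v = A.
  by apply: funext => k; apply/matrixP => i j; rewrite /Av mxE !crdE /=; case: (A k i j).
have BE : Bv v = B.
  by apply: funext => k; apply/matrixP => i j; rewrite /Bv mxE !crdE /=; case: (B k i j).
have XE : Xv v = s by case: c => _ _ _ _ ->; rewrite /Xv lE AE BE.
by exists v => //; rewrite /Dom /= XE lE AE BE.
Qed.

Lemma sep_Dom s : separable s -> exists2 v, Dom v & Xv v = s.
Proof.
move=> /sepE [K [w [A [B c]]]].
have [w' [A' [B' c']]] := comb_K0 c.
exact: Dom_encode c'.
Qed.

Lemma Dom_sep v : Dom v -> separable (Xv v).
Proof. by move=> D; apply/sepE; exists KK, (lamv v), (Av v), (Bv v). Qed.

End Param.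

Section Sep.
Variables (R : realType) (m n : nat).
Local Notation C := (R[i]).
Local Notation cRe := (@complex.Re R).
Local Notation cIm := (@complex.Im R).
Local Notation N := (m * n)%N.

Lemma herm1 p : Defs.hermitian (1%:M : 'M[C]_p).
Proof. by rewrite /Defs.hermitian /adj mxconj1 trmx1. Qed.

Lemma hermN p (A : 'M[C]_p) : Defs.hermitian A -> Defs.hermitian (- A).
Proof.
move=> hA; rewrite -scaleN1r; apply: hermZ => //; exact: rpredN1.
Qed.

Lemma hermB p (A B : 'M[C]_p) : Defs.hermitian A -> Defs.hermitian B -> Defs.hermitian (A - B).
Proof. by move=> hA hB; apply: hermD => //; apply: hermN. Qed.

Lemma ge0_Re (z : C) : 0 <= z -> 0 <= cRe z.
Proof. by rewrite lecE => /andP[]. Qed.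

Lemma zmod_id (V : zmodType) (x a b s : V) : x - a + b - s = x - s + (b - a).
Proof. by rewrite addrAC [x - a - s]addrAC addrA [x - s + b - a]addrAC. Qed.

Lemma tr_expand p (w d : 'M[C]_p) (t : R) :
  cRe (\tr ((w + t%:C%C *: d) *m (w + t%:C%C *: d))) =
  cRe (\tr (w *m w)) + 2 * t * cRe (\tr (w *m d)) + t ^+ 2 * cRe (\tr (d *m d)).
Proof.
rewrite mulmxDl !mulmxDr -!scalemxAl -!scalemxAr !mxtraceD !mxtraceZ.
rewrite [\tr (d *m w)]mxtrace_mulC !ReD !ReRM.
by ring.
Qed.

Lemma separation_main (sigma : 'M[C]_N) :
  Defs.hermitian sigma -> \tr sigma = 1 -> ~ separable sigma ->
  exists W : 'M[C]_N, [/\ Defs.hermitian W,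
    (forall s, separable s -> 0 <= \tr (W *m s)) & \tr (W *m sigma) < 0].
Proof.
move=> hsig tsig nsep.
case: (pselect (exists s : 'M[C]_N, separable s)) => [[s0 sp0]|nos]; last first.
  exists (- 1%:M); split.
  - by apply: hermN; apply: herm1.
  - by move=> s sp; exfalso; apply: nos; exists s.
  - by rewrite mulNmx mul1mx raddfN /= tsig ltrN10.
pose f (v : 'rV[R]_(#|{: Idx m n}|)) := cRe (\tr ((Xv v - sigma) *m (Xv v - sigma))).
have fc : continuous f.
  have := @cc_trace R _ _ (fun v => (Xv v - sigma) *m (Xv v - sigma)).
  case; last by [].
  by apply: ccmM; apply: ccmB; [apply: Xv_ccm|apply: ccm_cst|apply: Xv_ccm|apply: ccm_cst].
have [v0 D0 _] := sep_Dom sp0.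
have [vs vsD vsmin] := EVT_min_rV (ex_intro _ v0 D0) (Dom_compact (R:=R) (m:=m) (n:=n))
  (continuous_subspaceT fc).
move: vsD; rewrite inE => vsD.
pose xs := Xv vs.
have spx : separable xs by apply: Dom_sep.
have [hx tx] := sep_herm_tr spx.
have [w wdef] : {w | w = xs - sigma} by exists (xs - sigma).
have hw : Defs.hermitian w by rewrite wdef; apply: hermB.
have w0 : w != 0.
  by apply/eqP; rewrite wdef => /eqP; rewrite subr_eq0 => /eqP e; apply: nsep; rewrite -e.
have key s : separable s -> 0 <= cRe (\tr (w *m (s - xs))).
  move=> sps; have [hs ts] := sep_herm_tr sps.
  have [d ddef] : {d | d = s - xs} by exists (s - xs).
  have hd : Defs.hermitian d by rewrite ddef; apply: hermB.
  rewrite -ddef.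
  apply: (@quad_lemma R _ (cRe (\tr (d *m d)))); first by apply: ge0_Re; apply: trace_sq_ge0.
  move=> t t0 t1.
  have spy : separable ((1 - t)%:C%C *: xs + t%:C%C *: s).
    have [K1 [w1 [A1 [B1 c1]]]] := proj1 (sepE xs) spx.
    have [K2 [w2 [A2 [B2 c2]]]] := proj1 (sepE s) sps.
    have [w' [A' [B' c']]] := comb_conv c1 c2 (t := t) ltac:(by rewrite (ltW t0) t1).
    by apply/sepE; exists (K1 + K2)%N, w', A', B'.
  have [v Dv Xvy] := sep_Dom spy.
  have := vsmin v; rewrite inE => /(_ Dv).
  rewrite /f Xvy -/xs.
  have -> : (1 - t)%:C%C *: xs + t%:C%C *: s - sigma = w + t%:C%C *: d.
    by rewrite wdef ddef scalerBr rmorphB /= rmorph1 scalerBl scale1r zmod_id.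
  rewrite tr_expand -wdef.
  by move=> h; lra.
pose c := \tr (w *m xs).
have cR : c \is Num.real by apply/CrealP; apply: tr_herm_real.
exists (w + (- c) *: 1%:M); split.
- by apply: hermD => //; apply: hermZ; [rewrite rpredN|apply: herm1].
- move=> s sps; have [hs ts] := sep_herm_tr sps.
  rewrite mulmxDl -scalemxAl mul1mx mxtraceD mxtraceZ ts mulr1.
  have -> : \tr (w *m s) + - c = \tr (w *m (s - xs)).
    by rewrite mulmxBr raddfB.
  apply: real_ge0; last exact: key.
  by apply/CrealP; apply: tr_herm_real => //; apply: hermB.
- rewrite mulmxDl -scalemxAl mul1mx mxtraceD mxtraceZ tsig mulr1.
  have -> : \tr (w *m sigma) + - c = - \tr (w *m w).
    rewrite /c -raddfN /= -mulmxN -raddfD /= -mulmxDr.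
    have -> : sigma + - xs = - w by rewrite wdef opprB.
    by rewrite mulmxN raddfN.
  by rewrite oppr_lt0; apply: trace_sq_gt0.
Qed.

End Sep.

Section Main.
Variables (R : realType) (m n : nat).
Local Notation C := (R[i]).

Lemma part_i1 (W rho : 'M[C]_(m * n)) :
  real_EW W -> entangled rho -> detects W rho ->
  detects W (mxconj rho) /\ detects W (mxrealpart rho).
Proof.
move=> [[hW sepW exW] rW] ent det.
have cW : mxconj W = W := real_mx_conj rW.
have d1 : detects W (mxconj rho).
  by rewrite /detects -[W in W *m _]cW -mxconjM mxconj_trace conj_lt0.
split=> //; rewrite /detects tr_realpart_r; exact: half_lt0.
Qed.

Lemma part_i2 (W rho : 'M[C]_(m * n)) :
  EW W -> real_mx rho -> entangled rho -> detects W rho ->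
  [/\ EW (mxconj W), EW (mxrealpart W),
      detects (mxconj W) rho & detects (mxrealpart W) rho].
Proof.
move=> [hW sepW exW] rrho ent det.
have crho : mxconj rho = rho := real_mx_conj rrho.
have d1 : detects (mxconj W) rho by rewrite /detects tr_conj_mul crho conj_lt0.
have d2 : detects (mxrealpart W) rho by rewrite /detects tr_realpart; exact: half_lt0.
split=> //.
- split; first exact: conj_herm.
  + by move=> s ss; rewrite tr_conj_mul conjC_ge0; apply: sepW; apply: sep_conj.
  + by exists rho.
- split.
  + apply: hermZ; first by rewrite ger0_real // ltW // half_gt0.
    by apply: hermD => //; apply: conj_herm.
  + move=> s ss; rewrite tr_realpart; apply: half_ge0; first exact: sepW.
    by rewrite tr_conj_mul conjC_ge0; apply: sepW; apply: sep_conj.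
  + by exists rho.
Qed.

Lemma part_ii (rho : 'M[C]_(m * n)) : entangled rho ->
  ((exists W : 'M[C]_(m * n), real_EW W /\ detects W rho) <->
      (real_mx (mxrealpart rho) /\ entangled (mxrealpart rho))).
Proof.
move=> ent; split.
  move=> [W [rEW det]]; have [_ d2] := part_i1 rEW ent det.
  split; first exact: real_mx_realpart.
  split; first exact: state_realpart ent.1.
  move=> sp; case: rEW => [[_ sepW _] _].
  by have := le_lt_trans (sepW _ sp) d2; rewrite ltxx.
move=> [rr entr]; have [[[[hs _] ts] nsep]] := (entr).
have [W0 [hW0 sepW0 detW0]] := separation_main hs ts nsep.
have EW0 : EW W0 by split=> //; exists (mxrealpart rho).
have [_ EWr _ dr] := part_i2 EW0 rr entr detW0.
exists (mxrealpart W0); split; first by split=> //; apply: real_mx_realpart.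
move: dr; rewrite /detects tr_realpart_r.
have cW : mxconj (mxrealpart W0) = mxrealpart W0 by apply: real_mx_conj; apply: real_mx_realpart.
have hW : Defs.hermitian (mxrealpart W0) by case: EWr.
have hrho : Defs.hermitian rho by case: ent => [[[]]].
rewrite -[X in X *m mxconj rho]cW -mxconjM mxconj_trace tr_herm_real //.
rewrite -mulr2n; set t := \tr (_ *m rho); by rewrite -(mulr_natr t 2) mulrCA mulVf ?mulr1 // pnatr_eq0.
Qed.

End Main.

Theorem theorem1 (R : realType) (m n : nat) :
  (* (i), first part *)
  (forall W rho : 'M[R[i]]_(m * n),
     real_EW W -> entangled rho -> detects W rho ->
     detects W (mxconj rho) /\ detects W (mxrealpart rho)) /\
  (* (i), converse part *)
  (forall W rho : 'M[R[i]]_(m * n),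
     EW W -> real_mx rho -> entangled rho -> detects W rho ->
     [/\ EW (mxconj W), EW (mxrealpart W),
         detects (mxconj W) rho & detects (mxrealpart W) rho]) /\
  (* (ii) *)
  (forall rho : 'M[R[i]]_(m * n),
     entangled rho ->
     ((exists W : 'M[R[i]]_(m * n), real_EW W /\ detects W rho) <->
      (real_mx (mxrealpart rho) /\ entangled (mxrealpart rho)))).
Proof.
split; first exact: part_i1.
split; first exact: part_i2.
exact: part_ii.
Qed.
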